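(* Let $(X,T)$ be a dynamical system and let $K\subset\mathrm{Per}(T)$ be linkable. Then $\overline{\mathcal M_T^{co}(K)}$ equals the closed convex hull of $\mathcal M_T^{co}(K)$ in $\mathcal M(X)$ (closures in the weak$*$ topology).
   Context: A dynamical system $(X,T)$ consists of a complete separable metric space $(X,\rho)$ and a continuous surjection $T\colon X\to X$; $\mathcal M(X)$ is the space of Borel probability measures with the weak$*$ topology. For $x\in\mathrm{Per}(T)$ of minimal period $k$, $\gamma(x)=\frac1k\sum_{j=0}^{k-1}\delta_{T^jx}$; $\mathcal M_T^{co}(K)=\{\gamma(x):x\in K\}$. $B(x,n,\varepsilon)=\{y:\rho(T^jy,T^jx)<\varepsilon,\ 0\le j<n\}$. $K\subset\mathrm{Per}(T)$ is linkable if for all $y_1,y_2\in K$, $\varepsilon>0$, $\lambda\in[0,1]$ there exist $p_1,p_2,q_1,q_2\in\mathbb N$ and $z\in K$ with: $T^{q_2}z=z$; $\lambda-\varepsilon\le\frac{p_1}{p_1+p_2}\le\lambda+\varepsilon$; $p_1\le q_1\le(1+\varepsilon)p_1$ and $z\in B(y_1,p_1,\varepsilon)$; $p_2\le q_2-q_1\le(1+\varepsilon)p_2$ and $T^{q_1}z\in B(y_2,p_2,\varepsilon)$. *)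

(* Defs.v *)
From Stdlib Require Import Reals Lra List ClassicalEpsilon.
Open Scope R_scope.

Section Defs.
Context {X : Type}.

Definition is_metric (rho : X -> X -> R) : Prop :=
  (forall x y, 0 <= rho x y) /\
  (forall x y, rho x y = 0 <-> x = y) /\
  (forall x y, rho x y = rho y x) /\
  (forall x y z, rho x z <= rho x y + rho y z).

Definition cauchy_seq (rho : X -> X -> R) (u : nat -> X) : Prop :=
  forall eps, 0 < eps -> exists N, forall m n, (N <= m)%nat -> (N <= n)%nat ->
    rho (u m) (u n) < eps.

Definition converges_to (rho : X -> X -> R) (u : nat -> X) (x : X) : Prop :=
  forall eps, 0 < eps -> exists N, forall n, (N <= n)%nat -> rho (u n) x < eps.

Definition complete_metric (rho : X -> X -> R) : Prop :=
  forall u, cauchy_seq rho u -> exists x, converges_to rho u x.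

(* separable: there is a countable dense subset (vacuous if X is empty) *)
Definition separable_metric (rho : X -> X -> R) : Prop :=
  forall x0 : X, exists d : nat -> X,
    forall x eps, 0 < eps -> exists n, rho x (d n) < eps.

Definition continuous_map (rho : X -> X -> R) (T : X -> X) : Prop :=
  forall x eps, 0 < eps -> exists delta, 0 < delta /\
    forall y, rho x y < delta -> rho (T x) (T y) < eps.

Definition surjective_map (T : X -> X) : Prop := forall y, exists x, T x = y.

Definition dynamical_system (rho : X -> X -> R) (T : X -> X) : Prop :=
  is_metric rho /\ complete_metric rho /\ separable_metric rho /\
  continuous_map rho T /\ surjective_map T.

Definition open_set (rho : X -> X -> R) (U : X -> Prop) : Prop :=
  forall x, U x -> exists r, 0 < r /\ forall y, rho x y < r -> U y.

Definition sigma_algebra (F : (X -> Prop) -> Prop) : Prop :=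
  F (fun _ => True) /\
  (forall A, F A -> F (fun x => ~ A x)) /\
  (forall A : nat -> X -> Prop, (forall n, F (A n)) -> F (fun x => exists n, A n x)).

Definition borel (rho : X -> X -> R) (A : X -> Prop) : Prop :=
  forall F, sigma_algebra F -> (forall U, open_set rho U -> F U) -> F A.

(* A Borel probability measure, represented as a set function whose values
   on non-Borel sets are irrelevant. *)
Definition prob_measure (rho : X -> X -> R) (m : (X -> Prop) -> R) : Prop :=
  m (fun _ => True) = 1 /\
  (forall A, borel rho A -> 0 <= m A) /\
  (forall A : nat -> X -> Prop,
     (forall n, borel rho (A n)) ->
     (forall i j x, i <> j -> A i x -> A j x -> False) ->
     Un_cv (fun n => sum_f_R0 (fun i => m (A i)) n) (m (fun x => exists n, A n x))).

Fixpoint sumR (n : nat) (g : nat -> R) : R :=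
  match n with O => 0 | S k => sumR k g + g k end.

(* Lebesgue integral of a bounded (measurable) f: the limit of the sums
   sum_i t_(i+1) m(t_i < f <= t_(i+1)) over grids of the range with mesh -> 0. *)
Definition integral_is (m : (X -> Prop) -> R) (f : X -> R) (I : R) : Prop :=
  forall eps, 0 < eps -> exists delta, 0 < delta /\
    forall (n : nat) (t : nat -> R),
      (forall x, t O < f x) -> (forall x, f x <= t n) ->
      (forall i, (i < n)%nat -> t i < t (S i) < t i + delta) ->
      Rabs (sumR n (fun i => t (S i) * m (fun x => t i < f x <= t (S i))) - I) < eps.

Definition bounded_continuous (rho : X -> X -> R) (f : X -> R) : Prop :=
  (exists M, forall x, Rabs (f x) <= M) /\
  (forall x eps, 0 < eps -> exists delta, 0 < delta /\
     forall y, rho x y < delta -> Rabs (f x - f y) < eps).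

(* weak* closure in M(X) of a set S of measures: mu is in M(X) and every basic
   weak* neighbourhood of mu (finitely many bounded continuous test functions,
   radius eps) meets S. *)
Definition weak_closure (rho : X -> X -> R) (S : ((X -> Prop) -> R) -> Prop)
    (mu : (X -> Prop) -> R) : Prop :=
  prob_measure rho mu /\
  forall (fs : list (X -> R)) (eps : R),
    Forall (bounded_continuous rho) fs -> 0 < eps ->
    exists nu, S nu /\
      Forall (fun f => exists a b, integral_is mu f a /\ integral_is nu f b /\
                                   Rabs (a - b) < eps) fs.

Definition convex_hull (S : ((X -> Prop) -> R) -> Prop) (m : (X -> Prop) -> R) : Prop :=
  exists (n : nat) (lam : nat -> R) (ms : nat -> (X -> Prop) -> R),
    (forall i, (i < n)%nat -> 0 <= lam i /\ S (ms i)) /\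
    sumR n lam = 1 /\
    forall A, m A = sumR n (fun i => lam i * ms i A).

Definition periodic (T : X -> X) (x : X) : Prop :=
  exists n, (0 < n)%nat /\ Nat.iter n T x = x.

Definition minimal_period (T : X -> X) (x : X) (k : nat) : Prop :=
  (0 < k)%nat /\ Nat.iter k T x = x /\
  forall j, (0 < j)%nat -> (j < k)%nat -> Nat.iter j T x <> x.

Definition indic (P : Prop) : R :=
  if excluded_middle_informative P then 1 else 0.

Definition orbit_measure (T : X -> X) (x : X) (k : nat) : (X -> Prop) -> R :=
  fun A => / INR k * sumR k (fun j => indic (A (Nat.iter j T x))).

Definition Mco (T : X -> X) (K : X -> Prop) (m : (X -> Prop) -> R) : Prop :=
  exists x k, K x /\ minimal_period T x k /\ m = orbit_measure T x k.

Definition bowen_ball (rho : X -> X -> R) (T : X -> X) (x : X) (n : nat) (eps : R)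
    (y : X) : Prop :=
  forall j, (j < n)%nat -> rho (Nat.iter j T y) (Nat.iter j T x) < eps.

Definition linkable (rho : X -> X -> R) (T : X -> X) (K : X -> Prop) : Prop :=
  (forall x, K x -> periodic T x) /\
  forall y1 y2 eps lam, K y1 -> K y2 -> 0 < eps -> 0 <= lam <= 1 ->
    exists (p1 p2 q1 q2 : nat) (z : X),
      (0 < p1)%nat /\ (0 < p2)%nat /\ (0 < q1)%nat /\ (0 < q2)%nat /\
      K z /\ Nat.iter q2 T z = z /\
      lam - eps <= INR p1 / (INR p1 + INR p2) <= lam + eps /\
      INR p1 <= INR q1 <= (1 + eps) * INR p1 /\
      bowen_ball rho T y1 p1 eps z /\
      INR p2 <= INR q2 - INR q1 <= (1 + eps) * INR p2 /\
      bowen_ball rho T y2 p2 eps (Nat.iter q1 T z).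

End Defs.

(* Main.v *)
Require Import Defs.
From Stdlib Require Import Reals.
From Stdlib Require Import Lra Lia List ClassicalEpsilon Classical.
Open Scope R_scope.

Lemma sumR_ext n g h : (forall i, (i < n)%nat -> g i = h i) -> sumR n g = sumR n h.
Proof. induction n; simpl; intros H; auto. rewrite IHn by (intros; apply H; lia). rewrite H by lia; auto. Qed.

Lemma sumR_plus n g h : sumR n (fun i => g i + h i) = sumR n g + sumR n h.
Proof. induction n; simpl; [lra|rewrite IHn; lra]. Qed.

Lemma sumR_minus n g h : sumR n (fun i => g i - h i) = sumR n g - sumR n h.
Proof. induction n; simpl; [lra|rewrite IHn; lra]. Qed.

Lemma sumR_scal n c g : sumR n (fun i => c * g i) = c * sumR n g.
Proof. induction n; simpl; [lra|rewrite IHn; lra]. Qed.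

Lemma sumR_swap n m (g : nat -> nat -> R) :
  sumR n (fun i => sumR m (fun j => g i j)) = sumR m (fun j => sumR n (fun i => g i j)).
Proof.
  induction n; simpl.
  - induction m; simpl; [lra|rewrite <- IHm; lra].
  - rewrite IHn. rewrite <- sumR_plus. reflexivity.
Qed.

Lemma sumR_le n g h : (forall i, (i < n)%nat -> g i <= h i) -> sumR n g <= sumR n h.
Proof. induction n; simpl; intros H; [lra|]. assert (g n <= h n) by (apply H; lia).
  assert (sumR n g <= sumR n h) by (apply IHn; intros; apply H; lia). lra. Qed.

Lemma sumR_abs n g : Rabs (sumR n g) <= sumR n (fun i => Rabs (g i)).
Proof. induction n; simpl. rewrite Rabs_R0; lra.
  eapply Rle_trans; [apply Rabs_triang|]. lra. Qed.

Lemma sumR_const n c : sumR n (fun _ => c) = INR n * c.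
Proof. induction n; simpl sumR; [simpl; lra|]. rewrite IHn, S_INR; lra. Qed.

Lemma sumR_bound n g c : (forall i, (i < n)%nat -> Rabs (g i) <= c) -> Rabs (sumR n g) <= INR n * c.
Proof. intros H. eapply Rle_trans; [apply sumR_abs|]. rewrite <- sumR_const. apply sumR_le; auto. Qed.

Lemma sumR_split a b g : sumR (a + b) g = sumR a g + sumR b (fun j => g (a + j)%nat).
Proof. induction b; simpl. rewrite Nat.add_0_r; lra. rewrite Nat.add_succ_r; simpl. rewrite IHb; lra. Qed.

Lemma sumR_nonneg n g : (forall i, (i < n)%nat -> 0 <= g i) -> 0 <= sumR n g.
Proof. intros H. assert (sumR n (fun _ => 0) <= sumR n g) by (apply sumR_le; auto).
  rewrite sumR_const in H0. lra. Qed.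

Lemma iter_mult_periodic k (g : nat -> R) : (forall j, g (k + j)%nat = g j) ->
  forall m j, g (m * k + j)%nat = g j.
Proof. intros H; induction m; intros; simpl; auto.
  replace (k + m * k + j)%nat with (k + (m*k + j))%nat by lia. rewrite H; auto. Qed.

Lemma sumR_periodic a k g : (forall j, g (k + j)%nat = g j) -> sumR (a * k) g = INR a * sumR k g.
Proof. intros H. induction a. simpl; lra.
  replace (S a * k)%nat with (a * k + k)%nat by lia. rewrite sumR_split.
  rewrite (sumR_ext _ (fun j => g (a * k + j)%nat) g) by (intros; apply iter_mult_periodic; auto).
  rewrite IHa, S_INR; lra. Qed.

Lemma block_sum p k g B : (0 < k)%nat -> (forall j, g (k + j)%nat = g j) -> (forall j, Rabs (g j) <= B) ->
  Rabs (sumR p g - INR p * (/ INR k * sumR k g)) <= 2 * B * INR k.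
Proof.
  intros Hk Hp HB.
  assert (Hkpos : 0 < INR k) by (apply lt_0_INR; lia).
  pose (a := (p / k)%nat). pose (r := (p mod k)%nat).
  assert (Hpr : p = (a * k + r)%nat) by (unfold a, r; rewrite (Nat.div_mod_eq p k) at 1; lia).
  assert (Hr : (r < k)%nat) by (apply Nat.mod_upper_bound; lia).
  rewrite Hpr, sumR_split, sumR_periodic by auto.
  rewrite (sumR_ext _ (fun j => g (a * k + j)%nat) g) by (intros; apply iter_mult_periodic; auto).
  rewrite plus_INR, mult_INR.
  assert (HS : Rabs (sumR k g) <= INR k * B) by (apply sumR_bound; auto).
  assert (Hr' : Rabs (sumR r g) <= INR r * B) by (apply sumR_bound; auto).
  assert (HrR : INR r <= INR k) by (apply le_INR; lia).
  assert (B0 : 0 <= B) by (specialize (HB O); pose proof (Rabs_pos (g O)); lra).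
  replace (INR a * sumR k g + sumR r g - (INR a * INR k + INR r) * (/ INR k * sumR k g))
    with (sumR r g - INR r * (/ INR k * sumR k g)) by (field; lra).
  eapply Rle_trans; [apply Rabs_triang|]. rewrite Rabs_Ropp, Rabs_mult, Rabs_mult.
  rewrite (Rabs_right (INR r)) by (apply Rle_ge, pos_INR).
  rewrite Rabs_inv by lra. rewrite (Rabs_right (INR k)) by lra.
  assert (/ INR k * Rabs (sumR k g) <= B).
  { apply (Rmult_le_reg_l (INR k)); auto. rewrite <- Rmult_assoc, Rinv_r by lra. lra. }
  assert (INR r * (/ INR k * Rabs (sumR k g)) <= INR r * B) by (apply Rmult_le_compat_l; auto; apply pos_INR).
  nra.
Qed.

Lemma abs_le_iff x a : Rabs x <= a <-> - a <= x <= a.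
Proof. unfold Rabs; destruct (Rcase_abs x); split; intros; lra. Qed.

Lemma core_estimate (h g1 g2 : nat -> R) B k1 k2 p1 p2 q1 Q e eta0 lam r :
  (0 < k1)%nat -> (0 < k2)%nat ->
  (forall j, g1 (k1 + j)%nat = g1 j) -> (forall j, g2 (k2 + j)%nat = g2 j) ->
  (forall j, Rabs (h j) <= B) -> (forall j, Rabs (g1 j) <= B) -> (forall j, Rabs (g2 j) <= B) ->
  (p1 <= q1)%nat -> (q1 + p2 <= Q)%nat -> (0 < p1)%nat -> (0 < p2)%nat ->
  INR q1 <= (1 + e) * INR p1 -> INR Q - INR q1 <= (1 + e) * INR p2 -> 0 <= e ->
  (forall j, (j < p1)%nat -> Rabs (h j - g1 j) <= eta0) ->
  (forall j, (j < p2)%nat -> Rabs (h (q1 + j)%nat - g2 j) <= eta0) ->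
  Rabs (INR p1 / (INR p1 + INR p2) - lam) <= r ->
  Rabs (/ INR Q * sumR Q h - (lam * (/ INR k1 * sumR k1 g1) + (1 - lam) * (/ INR k2 * sumR k2 g2)))
   <= eta0 + 2 * B * (INR k1 + INR k2) / (INR p1 + INR p2) + 2 * B * e + 2 * B * r.
Proof.
  intros Hk1 Hk2 Hg1 Hg2 Hh HB1 HB2 Hpq HqQ Hp1 Hp2 Hq1e HQe He Hc1 Hc2 Hlam.
  assert (B0 : 0 <= B) by (specialize (Hh O); pose proof (Rabs_pos (h O)); lra).
  set (A1 := / INR k1 * sumR k1 g1). set (A2 := / INR k2 * sumR k2 g2).
  assert (HA1 : Rabs A1 <= B).
  { unfold A1. assert (Rabs (sumR k1 g1) <= INR k1 * B) by (apply sumR_bound; auto).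
    assert (0 < INR k1) by (apply lt_0_INR; lia).
    rewrite Rabs_mult, Rabs_inv, Rabs_right by lra.
    apply (Rmult_le_reg_l (INR k1)); auto. rewrite <- Rmult_assoc, Rinv_r by lra. lra. }
  assert (HA2 : Rabs A2 <= B).
  { unfold A2. assert (Rabs (sumR k2 g2) <= INR k2 * B) by (apply sumR_bound; auto).
    assert (0 < INR k2) by (apply lt_0_INR; lia).
    rewrite Rabs_mult, Rabs_inv, Rabs_right by lra.
    apply (Rmult_le_reg_l (INR k2)); auto. rewrite <- Rmult_assoc, Rinv_r by lra. lra. }
  destruct (Nat.le_exists_sub p1 q1 Hpq) as [m [Hm _]].
  destruct (Nat.le_exists_sub (q1 + p2) Q HqQ) as [t [Ht _]].
  assert (HS : sumR Q h = sumR p1 h + sumR m (fun j => h (p1 + j)%nat)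
                + sumR p2 (fun j => h (q1 + j)%nat) + sumR t (fun j => h (q1 + p2 + j)%nat)).
  { rewrite Ht, (Nat.add_comm t), sumR_split, sumR_split, Hm, (Nat.add_comm m p1), sumR_split. lra. }
  assert (HD1 : Rabs (sumR p1 h - sumR p1 g1) <= INR p1 * eta0)
    by (rewrite <- sumR_minus; apply sumR_bound; auto).
  assert (HD2 : Rabs (sumR p2 (fun j => h (q1 + j)%nat) - sumR p2 g2) <= INR p2 * eta0)
    by (rewrite <- sumR_minus; apply sumR_bound; auto).
  assert (HE1 := block_sum p1 k1 g1 B Hk1 Hg1 HB1).
  assert (HE2 := block_sum p2 k2 g2 B Hk2 Hg2 HB2).
  fold A1 in HE1. fold A2 in HE2.
  assert (HM : Rabs (sumR m (fun j => h (p1 + j)%nat)) <= INR m * B) by (apply sumR_bound; auto).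
  assert (HT : Rabs (sumR t (fun j => h (q1 + p2 + j)%nat)) <= INR t * B) by (apply sumR_bound; auto).
  assert (Hmr : INR m <= e * INR p1).
  { rewrite Hm, plus_INR in Hq1e. lra. }
  assert (Htr : INR t <= e * INR p2).
  { rewrite Ht, !plus_INR in HQe. lra. }
  assert (Hp1r : 0 < INR p1) by (apply lt_0_INR; lia).
  assert (Hp2r : 0 < INR p2) by (apply lt_0_INR; lia).
  assert (Hk1r : 0 < INR k1) by (apply lt_0_INR; lia).
  assert (Hk2r : 0 < INR k2) by (apply lt_0_INR; lia).
  set (P := INR p1 + INR p2).
  set (Qr := INR Q).
  assert (HQr : Qr = INR p1 + INR m + INR p2 + INR t) by (unfold Qr; rewrite Ht, Hm, !plus_INR; lra).
  set (S := sumR Q h). set (Xv := INR p1 * A1 + INR p2 * A2).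
  assert (HSX : Rabs (S - Xv) <= P * eta0 + 2 * B * (INR k1 + INR k2) + B * e * P).
  { unfold S, Xv, P. rewrite HS.
    apply abs_le_iff in HD1, HD2, HE1, HE2, HM, HT. apply abs_le_iff.
    assert (INR m * B <= e * INR p1 * B) by (apply Rmult_le_compat_r; lra).
    assert (INR t * B <= e * INR p2 * B) by (apply Rmult_le_compat_r; lra).
    split; nra. }
  assert (HPpos : 0 < P) by (unfold P; lra).
  assert (HPQ : P <= Qr) by (unfold P; rewrite HQr; pose proof (pos_INR m); pose proof (pos_INR t); lra).
  assert (HQP : Qr - P <= e * P) by (unfold P; rewrite HQr; lra).
  assert (HX : Rabs Xv <= B * P).
  { unfold Xv, P. apply abs_le_iff in HA1, HA2. apply abs_le_iff. split; nra. }
  assert (T1 : Rabs ((S - Xv) / Qr) <= eta0 + 2 * B * (INR k1 + INR k2) / P + B * e).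
  { unfold Rdiv. rewrite Rabs_mult, Rabs_inv, (Rabs_right Qr) by lra.
    apply Rle_trans with (Rabs (S - Xv) * / P).
    - apply Rmult_le_compat_l; [apply Rabs_pos|]. apply Rinv_le_contravar; lra.
    - apply (Rmult_le_reg_l P); auto. rewrite Rmult_comm, Rmult_assoc, Rinv_l by lra.
      replace (P * (eta0 + 2 * B * (INR k1 + INR k2) * / P + B * e)) with (P * eta0 + 2 * B * (INR k1 + INR k2) + B * e * P) by (field; lra). lra. }
  assert (T2 : Rabs (Xv * (/ Qr - / P)) <= B * e).
  { replace (Xv * (/ Qr - / P)) with ((P - Qr) * Xv / (Qr * P)) by (field; lra).
    unfold Rdiv. rewrite Rabs_mult, Rabs_mult, Rabs_inv, (Rabs_right (Qr * P)) by nra.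
    rewrite Rabs_minus_sym, Rabs_right by lra.
    apply Rle_trans with ((e * P) * (B * P) * / (Qr * P)).
    - apply Rmult_le_compat_r. left; apply Rinv_0_lt_compat; nra.
      apply Rmult_le_compat; [lra|apply Rabs_pos|lra|lra].
    - replace ((e * P) * (B * P) * / (Qr * P)) with (B * e * (P / Qr)) by (field; lra).
      assert (P / Qr <= 1) by (apply (Rmult_le_reg_l Qr); [lra|]; field_simplify; lra).
      assert (0 <= B * e) by nra. nra. }
  assert (T3 : Rabs (Xv / P - (lam * A1 + (1 - lam) * A2)) <= 2 * B * r).
  { replace (Xv / P - (lam * A1 + (1 - lam) * A2)) with ((INR p1 / P - lam) * (A1 - A2))
      by (unfold Xv, P; field; unfold P in HPpos; lra).
    rewrite Rabs_mult. fold P in Hlam.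
    assert (Rabs (A1 - A2) <= 2 * B) by (eapply Rle_trans; [apply Rabs_triang|]; rewrite Rabs_Ropp; lra).
    assert (0 <= r) by (pose proof (Rabs_pos (INR p1 / P - lam)); lra).
    replace (2 * B * r) with (r * (2 * B)) by ring.
    apply Rmult_le_compat; auto; apply Rabs_pos. }
  replace (/ Qr * S - (lam * A1 + (1 - lam) * A2)) with
    ((S - Xv) / Qr + Xv * (/ Qr - / P) + (Xv / P - (lam * A1 + (1 - lam) * A2)))
    by (field; split; lra).
  eapply Rle_trans; [apply Rabs_triang|].
  eapply Rle_trans; [apply Rplus_le_compat_r; apply Rabs_triang|].
  lra.
Qed.


Section Integ.
Context {X : Type}.

Definition avg (T : X -> X) (f : X -> R) (x : X) (k : nat) : R :=
  / INR k * sumR k (fun j => f (Nat.iter j T x)).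

Lemma grid_exists (f : X -> R) B : (forall x, Rabs (f x) <= B) -> forall delta, 0 < delta ->
  exists n t, (forall x, t O < f x) /\ (forall x, f x <= t n) /\
    (forall i, (i < n)%nat -> t i < t (S i) < t i + delta).
Proof.
  intros HB delta Hd.
  destruct (INR_unbounded ((2 * B + 2) / (delta / 2))) as [n Hn].
  exists n, (fun i => - B - 1 + INR i * (delta / 2)). split; [|split].
  - intros x. specialize (HB x). apply abs_le_iff in HB. simpl. lra.
  - intros x. specialize (HB x). apply abs_le_iff in HB.
    assert (INR n * (delta/2) > 2 * B + 2).
    { apply (Rmult_gt_compat_r (delta/2)) in Hn; [|lra].
      unfold Rdiv in Hn. rewrite Rmult_assoc, Rinv_l in Hn by lra. lra. }
    lra.
  - intros i0 _. rewrite S_INR. split; lra.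
Qed.

Lemma integral_unique (m : (X -> Prop) -> R) f B I J : (forall x, Rabs (f x) <= B) ->
  integral_is m f I -> integral_is m f J -> I = J.
Proof.
  intros HB HI HJ.
  destruct (Req_dec I J) as [|Hne]; auto. exfalso.
  set (eps := Rabs (I - J) / 2).
  assert (He : 0 < eps) by (unfold eps; assert (0 < Rabs (I - J)) by (apply Rabs_pos_lt; lra); lra).
  destruct (HI eps He) as [d1 [Hd1 H1]]. destruct (HJ eps He) as [d2 [Hd2 H2]].
  destruct (grid_exists f B HB (Rmin d1 d2)) as [n [t [T0 [Tn Ti]]]].
  { apply Rmin_pos; auto. }
  assert (Ti1 : forall i, (i < n)%nat -> t i < t (S i) < t i + d1).
  { intros i Hi. specialize (Ti i Hi). pose proof (Rmin_l d1 d2). lra. }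
  assert (Ti2 : forall i, (i < n)%nat -> t i < t (S i) < t i + d2).
  { intros i Hi. specialize (Ti i Hi). pose proof (Rmin_r d1 d2). lra. }
  specialize (H1 n t T0 Tn Ti1). specialize (H2 n t T0 Tn Ti2).
  set (S := sumR n _) in H1, H2.
  assert (Rabs (I - J) <= Rabs (S - I) + Rabs (S - J)).
  { replace (I - J) with (-(S - I) + (S - J)) by ring. eapply Rle_trans; [apply Rabs_triang|].
    rewrite Rabs_Ropp; lra. }
  unfold eps in *. lra.
Qed.

Lemma ind_zero n (t : nat -> R) v : (forall i, (i < n)%nat -> t i < t (S i)) -> t n < v ->
  sumR n (fun i => t (S i) * indic (t i < v <= t (S i))) = 0.
Proof.
  induction n; intros Ht Hv; simpl; auto.
  rewrite IHn. 2: intros; apply Ht; lia. 2: specialize (Ht n (Nat.lt_succ_diag_r n)); lra.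
  unfold indic. destruct (excluded_middle_informative _); lra.
Qed.

Lemma ind_one n (t : nat -> R) v d : (forall i, (i < n)%nat -> t i < t (S i) < t i + d) ->
  t O < v -> v <= t n ->
  v <= sumR n (fun i => t (S i) * indic (t i < v <= t (S i))) < v + d.
Proof.
  induction n; intros Ht H0 Hn; simpl sumR.
  - simpl in Hn; lra.
  - destruct (Rle_lt_dec v (t n)) as [Hle|Hlt].
    + assert (indic (t n < v <= t (S n)) = 0) by (unfold indic; destruct (excluded_middle_informative _); lra).
      rewrite H, Rmult_0_r, Rplus_0_r. apply IHn; auto; intros; apply Ht; lia.
    + rewrite ind_zero; [| intros; apply Ht; lia | auto].
      assert (indic (t n < v <= t (S n)) = 1) by (unfold indic; destruct (excluded_middle_informative _); auto; lra).
      rewrite H. specialize (Ht n (Nat.lt_succ_diag_r n)). lra.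
Qed.

Lemma integral_orbit T (f : X -> R) x k : (0 < k)%nat ->
  integral_is (orbit_measure T x k) f (avg T f x k).
Proof.
  intros Hk eps He. exists (eps / 2). split; [lra|].
  intros n t T0 Tn Ti. unfold orbit_measure, avg.
  assert (Hkr : 0 < INR k) by (apply lt_0_INR; lia).
  rewrite (sumR_ext n _ (fun i => / INR k * sumR k (fun j => t (S i) * indic (t i < f (Nat.iter j T x) <= t (S i)))))
    by (intros; rewrite <- !sumR_scal; apply sumR_ext; intros; ring).
  rewrite sumR_scal, sumR_swap, <- Rmult_minus_distr_l, <- sumR_minus.
  assert (Hb : forall j, (j < k)%nat -> 0 <= sumR n (fun i => t (S i) * indic (t i < f (Nat.iter j T x) <= t (S i))) - f (Nat.iter j T x) <= eps / 2).
  { intros j _. pose proof (ind_one n t (f (Nat.iter j T x)) (eps/2) Ti (T0 _) (Tn _)). lra. }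
  set (u := fun j => _ - _) in Hb |- *.
  assert (0 <= sumR k u) by (apply sumR_nonneg; intros; apply Hb; auto).
  assert (sumR k u <= INR k * (eps/2)) by (rewrite <- sumR_const; apply sumR_le; intros; apply Hb; auto).
  rewrite Rabs_right.
  - apply Rle_lt_trans with (/ INR k * (INR k * (eps / 2))).
    + apply Rmult_le_compat_l; auto. left; apply Rinv_0_lt_compat; auto.
    + rewrite <- Rmult_assoc, Rinv_l by lra. lra.
  - apply Rle_ge, Rmult_le_pos; auto. left; apply Rinv_0_lt_compat; auto.
Qed.

End Integ.


Lemma min_delta_nat N (P : nat -> R -> Prop) :
  (forall i d d', 0 < d' <= d -> P i d -> P i d') ->
  (forall i, (i < N)%nat -> exists d, 0 < d /\ P i d) -> exists d, 0 < d /\ forall i, (i < N)%nat -> P i d.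
Proof.
  intros Hm. induction N; intros H.
  - exists 1; split; [lra| intros; lia].
  - destruct IHN as [d1 [Hd1 H1]]. { intros; apply H; lia. }
    destruct (H N (Nat.lt_succ_diag_r N)) as [d2 [Hd2 H2]].
    exists (Rmin d1 d2). split; [apply Rmin_pos; auto|].
    intros i Hi. destruct (Nat.eq_dec i N) as [->|].
    + apply Hm with d2; auto. split; [apply Rmin_pos; auto| apply Rmin_r].
    + apply Hm with d1; [split; [apply Rmin_pos; auto| apply Rmin_l]|]. apply H1; lia.
Qed.

Lemma min_delta_list {A : Type} (l : list A) (P : A -> R -> Prop) :
  (forall i d d', 0 < d' <= d -> P i d -> P i d') ->
  (forall i, In i l -> exists d, 0 < d /\ P i d) -> exists d, 0 < d /\ forall i, In i l -> P i d.
Proof.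
  intros Hm. induction l as [|a l IH]; intros H.
  - exists 1; split; [lra| intros _ []].
  - destruct IH as [d1 [Hd1 H1]]. { intros; apply H; simpl; auto. }
    destruct (H a (or_introl eq_refl)) as [d2 [Hd2 H2]].
    exists (Rmin d1 d2). split; [apply Rmin_pos; auto|].
    intros i [<-|Hi].
    + apply Hm with d2; auto. split; [apply Rmin_pos; auto| apply Rmin_r].
    + apply Hm with d1; [split; [apply Rmin_pos; auto| apply Rmin_l]|]. apply H1; auto.
Qed.

Section Combo.
Context {X : Type}.

Lemma integral_combo (nu : (X -> Prop) -> R) N lam (ms : nat -> (X -> Prop) -> R) f c :
  (forall A, nu A = sumR N (fun l => lam l * ms l A)) -> (forall l, (l < N)%nat -> 0 <= lam l) ->
  sumR N lam = 1 -> (forall l, (l < N)%nat -> integral_is (ms l) f (c l)) ->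
  integral_is nu f (sumR N (fun l => lam l * c l)).
Proof.
  intros Hnu Hl Hs Hi eps He.
  destruct (min_delta_nat N (fun l d => forall (n : nat) (t : nat -> R),
      (forall x, t O < f x) -> (forall x, f x <= t n) ->
      (forall i, (i < n)%nat -> t i < t (S i) < t i + d) ->
      Rabs (sumR n (fun i => t (S i) * ms l (fun x => t i < f x <= t (S i))) - c l) < eps / 2))
    as [d [Hd H]].
  { intros i d d' Hdd HP n t A B C. apply HP; auto. intros i0 Hi0. specialize (C i0 Hi0). lra. }
  { intros l Hl'. destruct (Hi l Hl' (eps/2)) as [d [Hd H]]; [lra|]. exists d; split; auto. }
  exists d. split; auto. intros n t T0 Tn Ti.
  rewrite (sumR_ext n _ (fun i => sumR N (fun l => lam l * (t (S i) * ms l (fun x => t i < f x <= t (S i))))))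
    by (intros; rewrite Hnu, <- sumR_scal; apply sumR_ext; intros; ring).
  rewrite sumR_swap.
  rewrite (sumR_ext N (fun j => sumR n _) (fun l => lam l * sumR n (fun i => t (S i) * ms l (fun x => t i < f x <= t (S i)))))
    by (intros; rewrite <- sumR_scal; reflexivity).
  rewrite <- sumR_minus.
  rewrite (sumR_ext N _ (fun l => lam l * (sumR n (fun i => t (S i) * ms l (fun x => t i < f x <= t (S i))) - c l)))
    by (intros; ring).
  eapply Rle_lt_trans; [apply sumR_abs|].
  apply Rle_lt_trans with (sumR N (fun l => lam l * (eps/2))).
  - apply sumR_le. intros l Hl'. rewrite Rabs_mult, Rabs_right by (apply Rle_ge; auto).
    apply Rmult_le_compat_l; auto. left; apply H; auto.
  - rewrite (sumR_ext N _ (fun l => (eps/2) * lam l)) by (intros; ring). rewrite sumR_scal, Hs. lra.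
Qed.

End Combo.


Section Per.
Context {X : Type}.

Lemma iter_add (T : X -> X) a b x : Nat.iter (a + b) T x = Nat.iter a T (Nat.iter b T x).
Proof. induction a; simpl; auto. rewrite IHa; auto. Qed.

Lemma iter_mul (T : X -> X) k x : Nat.iter k T x = x -> forall m, Nat.iter (m * k) T x = x.
Proof. intros H m; induction m; simpl; auto. rewrite iter_add, IHm; auto. Qed.

Lemma iter_shift (T : X -> X) k x : Nat.iter k T x = x -> forall j, Nat.iter (k + j) T x = Nat.iter j T x.
Proof. intros H j. rewrite Nat.add_comm, iter_add, H; auto. Qed.

Lemma iter_mod (T : X -> X) k x : (0 < k)%nat -> Nat.iter k T x = x -> forall j, Nat.iter j T x = Nat.iter (j mod k) T x.
Proof. intros Hk H j.
  assert (E : j = (j mod k + (j / k) * k)%nat) by (pose proof (Nat.div_mod_eq j k); lia).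
  transitivity (Nat.iter (j mod k + (j / k) * k) T x); [rewrite <- E; auto|].
  rewrite iter_add, iter_mul; auto. Qed.

Lemma min_period_exists (T : X -> X) x : periodic T x -> exists k, minimal_period T x k.
Proof.
  intros [n [Hn Hx]].
  induction n as [n IH] using (well_founded_induction Wf_nat.lt_wf).
  destruct (classic (exists j, (0 < j)%nat /\ (j < n)%nat /\ Nat.iter j T x = x)) as [[j [Hj1 [Hj2 Hj3]]]|Hno].
  - apply (IH j); auto.
  - exists n. split; auto. split; auto. intros j Hj1 Hj2 Heq. apply Hno; eauto.
Qed.

Lemma avg_multiple (T : X -> X) f x k Q : minimal_period T x k -> (0 < Q)%nat -> Nat.iter Q T x = x ->
  avg T f x Q = avg T f x k.
Proof.
  intros [Hk [Hkx Hmin]] HQ HQx.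
  assert (Hr : (Q mod k = 0)%nat).
  { destruct (Nat.eq_dec (Q mod k) 0) as [|Hne]; auto. exfalso.
    apply (Hmin (Q mod k)); [lia| apply Nat.mod_upper_bound; lia|].
    rewrite <- iter_mod; auto. }
  assert (HQ' : Q = ((Q / k) * k)%nat) by (pose proof (Nat.div_mod_eq Q k); lia).
  set (a := (Q / k)%nat) in HQ'.
  assert (0 < INR a).
  { apply lt_0_INR. destruct a eqn:E; [|lia]. simpl in HQ'. lia. }
  assert (0 < INR k) by (apply lt_0_INR; lia).
  unfold avg. rewrite HQ'. rewrite sumR_periodic.
  2: { intros j. rewrite iter_shift; auto. }
  rewrite mult_INR. field. lra.
Qed.

End Per.


Lemma spacing (M a b a' b' : nat) lamA e d :
  d = / (2 * INR M * INR M) -> 0 < e -> 4 * e <= d ->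
  (0 < a + b)%nat -> (0 < a' + b')%nat -> (a + b < M)%nat -> (a' + b' < M)%nat ->
  Rabs (INR a / (INR a + INR b) - lamA) <= e ->
  Rabs (INR a' / (INR a' + INR b') - (lamA + d)) <= e -> False.
Proof.
  intros Hd He Hed Hs Hs' HM HM' H1 H2.
  apply abs_le_iff in H1, H2.
  set (s := INR a + INR b) in *. set (s' := INR a' + INR b') in *.
  assert (Hspos : 0 < s) by (unfold s; rewrite <- plus_INR; apply lt_0_INR; auto).
  assert (Hs'pos : 0 < s') by (unfold s'; rewrite <- plus_INR; apply lt_0_INR; auto).
  assert (HsM : s + 1 <= INR M) by (unfold s; rewrite <- plus_INR, <- S_INR; apply le_INR; lia).
  assert (Hs'M : s' + 1 <= INR M) by (unfold s'; rewrite <- plus_INR, <- S_INR; apply le_INR; lia).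
  assert (Hdpos : 0 < d) by lra.
  assert (Hgap : INR a' / s' - INR a / s >= d - 2 * e) by lra.
  assert (Hgap2 : INR a' / s' - INR a / s <= d + 2 * e) by lra.
  assert (Hdiff : INR a' / s' - INR a / s = (INR a' * s - INR a * s') / (s * s')) by (field; lra).
  assert (Hpos : INR a * s' < INR a' * s).
  { assert (0 < (INR a' * s - INR a * s') / (s * s')) by (rewrite <- Hdiff; lra).
    assert (0 < s * s') by nra.
    assert (0 < INR a' * s - INR a * s').
    { apply (Rmult_lt_reg_r (/ (s * s'))). apply Rinv_0_lt_compat; auto. rewrite Rmult_0_l. exact H. }
    lra. }
  assert (Hnat : (a * (a' + b') < a' * (a + b))%nat).
  { apply INR_lt. rewrite !mult_INR, !plus_INR. fold s s'. lra. }
  assert (Hone : INR a' * s - INR a * s' >= 1).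
  { assert (INR (a * (a' + b')) + 1 <= INR (a' * (a + b))) by (rewrite <- S_INR; apply le_INR; lia).
    rewrite !mult_INR, !plus_INR in H. fold s s' in H. lra. }
  assert (HM0 : 0 < INR M) by lra.
  assert (Hss : s * s' < INR M * INR M) by nra.
  assert (HgapL : INR a' / s' - INR a / s >= / (s * s')).
  { rewrite Hdiff. unfold Rdiv. apply Rle_ge.
    assert (0 < s * s') by nra. assert (0 < / (s * s')) by (apply Rinv_0_lt_compat; auto).
    assert (1 * / (s * s') <= (INR a' * s - INR a * s') * / (s * s')) by (apply Rmult_le_compat_r; lra).
    lra. }
  assert (/ (INR M * INR M) < / (s * s')) by (apply Rinv_lt_contravar; [apply Rmult_lt_0_compat; nra|exact Hss]).
  assert (2 * d = / (INR M * INR M)) by (rewrite Hd; field; lra).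
  lra.
Qed.

Lemma bound_list {X : Type} (fs : list (X -> R)) :
  (forall f, In f fs -> exists M, forall x, Rabs (f x) <= M) ->
  exists B, 0 <= B /\ forall f, In f fs -> forall x, Rabs (f x) <= B.
Proof.
  induction fs as [|g fs IH]; intros H.
  - exists 0; split; [lra| intros _ []].
  - destruct IH as [B1 [HB1 H1]]. { intros; apply H; simpl; auto. }
    destruct (H g (or_introl eq_refl)) as [B2 H2].
    exists (Rmax B1 B2). split. { eapply Rle_trans; [exact HB1| apply Rmax_l]. }
    intros f [<-|Hf] x.
    + eapply Rle_trans; [apply H2| apply Rmax_r].
    + eapply Rle_trans; [apply H1; auto| apply Rmax_l].
Qed.


Section Two.
Context {X : Type}.

Lemma two_point (rho : X -> X -> R) T K (Hmet : is_metric rho) (HK : linkable rho T K)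
  z1 k1 y k2 lam :
  K z1 -> minimal_period T z1 k1 -> K y -> minimal_period T y k2 -> 0 <= lam <= 1 ->
  forall fs, (forall f, In f fs -> bounded_continuous rho f) -> forall eta, 0 < eta ->
  exists w k, K w /\ minimal_period T w k /\ forall f, In f fs ->
    Rabs (avg T f w k - (lam * avg T f z1 k1 + (1 - lam) * avg T f y k2)) < eta.
Proof.
  intros Hz1 Hmz1 Hy Hmy Hlam fs Hfs eta Heta.
  destruct Hmet as [_ [_ [Hsym _]]].
  destruct (bound_list fs) as [B [HB0 HB]].
  { intros f Hf. apply (proj1 (Hfs f Hf)). }
  set (eta0 := eta / 4).
  destruct (min_delta_list fs (fun f dl =>
     (forall i, (i < k1)%nat -> forall u, rho (Nat.iter i T z1) u < dl -> Rabs (f (Nat.iter i T z1) - f u) < eta0) /\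
     (forall i, (i < k2)%nat -> forall u, rho (Nat.iter i T y) u < dl -> Rabs (f (Nat.iter i T y) - f u) < eta0)))
   as [dl [Hdl Hcont]].
  { intros f d0 d' Hd [H1 H2]. split; intros i Hi u Hu; [apply H1| apply H2]; auto; lra. }
  { intros f Hf. destruct (Hfs f Hf) as [_ Hc].
    destruct (min_delta_nat k1 (fun i dl => forall u, rho (Nat.iter i T z1) u < dl -> Rabs (f (Nat.iter i T z1) - f u) < eta0))
      as [d1 [Hd1 H1]].
    { intros i d0 d' Hd H u Hu. apply H; lra. }
    { intros i _. destruct (Hc (Nat.iter i T z1) eta0) as [dd [Hdd H]]; [unfold eta0; lra|]. eauto. }
    destruct (min_delta_nat k2 (fun i dl => forall u, rho (Nat.iter i T y) u < dl -> Rabs (f (Nat.iter i T y) - f u) < eta0))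
      as [d2 [Hd2 H2]].
    { intros i d0 d' Hd H u Hu. apply H; lra. }
    { intros i _. destruct (Hc (Nat.iter i T y) eta0) as [dd [Hdd H]]; [unfold eta0; lra|]. eauto. }
    exists (Rmin d1 d2). split; [apply Rmin_pos; auto|]. split.
    - intros i Hi u Hu. apply H1; auto. pose proof (Rmin_l d1 d2); lra.
    - intros i Hi u Hu. apply H2; auto. pose proof (Rmin_r d1 d2); lra. }
  destruct Hmz1 as [Hk1 [Hz1p Hz1m]]. destruct Hmy as [Hk2 [Hyp Hym]].
  assert (Hk1r : 0 < INR k1) by (apply lt_0_INR; lia).
  assert (Hk2r : 0 < INR k2) by (apply lt_0_INR; lia).
  destruct (INR_unbounded (16 * (B + 1) * (INR k1 + INR k2 + 1) / eta)) as [M0 HM0].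
  set (M := S M0).
  assert (HM1 : 1 <= INR M) by (unfold M; rewrite S_INR; pose proof (pos_INR M0); lra).
  assert (HMbig : 16 * (B + 1) * (INR k1 + INR k2 + 1) < eta * INR M).
  { unfold M. rewrite S_INR. apply (Rmult_gt_compat_l eta) in HM0; auto.
    assert (eta * (16 * (B + 1) * (INR k1 + INR k2 + 1) / eta) = 16 * (B + 1) * (INR k1 + INR k2 + 1)) by (field; lra).
    lra. }
  set (d := / (2 * INR M * INR M)).
  assert (Hdpos : 0 < d) by (unfold d; apply Rinv_0_lt_compat; nra).
  assert (HdM : d <= / (2 * INR M)).
  { unfold d. apply Rinv_le_contravar; nra. }
  assert (Hd12 : d <= 1 / 2).
  { eapply Rle_trans; [exact HdM|]. unfold Rdiv. rewrite Rmult_1_l. apply Rinv_le_contravar; lra. }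
  set (e := Rmin dl (Rmin (d / 4) (eta / (16 * (B + 1))))).
  assert (Hepos : 0 < e) by (unfold e; repeat apply Rmin_pos; try lra; apply Rdiv_lt_0_compat; lra).
  assert (Hedl : e <= dl) by apply Rmin_l.
  assert (Hed : e <= d / 4) by (unfold e; eapply Rle_trans; [apply Rmin_r| apply Rmin_l]).
  assert (Hee : e <= eta / (16 * (B + 1))) by (unfold e; eapply Rle_trans; [apply Rmin_r| apply Rmin_r]).
  assert (Finish : forall lam', Rabs (lam' - lam) <= d ->
    forall (p1 p2 q1 q2 : nat) (w : X),
      (0 < p1)%nat /\ (0 < p2)%nat /\ (0 < q1)%nat /\ (0 < q2)%nat /\
      K w /\ Nat.iter q2 T w = w /\
      lam' - e <= INR p1 / (INR p1 + INR p2) <= lam' + e /\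
      INR p1 <= INR q1 <= (1 + e) * INR p1 /\
      bowen_ball rho T z1 p1 e w /\
      INR p2 <= INR q2 - INR q1 <= (1 + e) * INR p2 /\
      bowen_ball rho T y p2 e (Nat.iter q1 T w) ->
      (M <= p1 + p2)%nat ->
      exists w k, K w /\ minimal_period T w k /\ forall f, In f fs ->
        Rabs (avg T f w k - (lam * avg T f z1 k1 + (1 - lam) * avg T f y k2)) < eta).
  { intros lam' Hlam' p1 p2 q1 q2 w [Hp1 [Hp2 [Hq1 [Hq2 [Kw [Hw [Hfr [Hq1b [Hbw1 [Hq2b Hbw2]]]]]]]]]] HPM.
    destruct (min_period_exists T w (proj1 HK w Kw)) as [kw Hkw].
    exists w, kw. split; auto. split; auto. intros f Hf.
    rewrite <- (avg_multiple T f w kw q2 Hkw Hq2 Hw).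
    destruct (Hcont f Hf) as [Hc1 Hc2].
    assert (Hpq : (p1 <= q1)%nat) by (apply INR_le; lra).
    assert (HqQ : (q1 + p2 <= q2)%nat) by (apply INR_le; rewrite plus_INR; lra).
    assert (Hp1r : 0 < INR p1) by (apply lt_0_INR; lia).
    assert (Hp2r : 0 < INR p2) by (apply lt_0_INR; lia).
    assert (HPr : INR M <= INR p1 + INR p2) by (rewrite <- plus_INR; apply le_INR; lia).
    pose proof (core_estimate (fun j => f (Nat.iter j T w)) (fun j => f (Nat.iter j T z1)) (fun j => f (Nat.iter j T y))
      B k1 k2 p1 p2 q1 q2 e eta0 lam (e + d) Hk1 Hk2) as C.
    unfold avg. eapply Rle_lt_trans; [apply C|].
    - intros j. rewrite iter_shift; auto.
    - intros j. rewrite iter_shift; auto.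
    - intros; apply HB; auto.
    - intros; apply HB; auto.
    - intros; apply HB; auto.
    - exact Hpq.
    - exact HqQ.
    - exact Hp1.
    - exact Hp2.
    - lra.
    - lra.
    - lra.
    - intros j Hj. specialize (Hbw1 j Hj). simpl in Hbw1.
      rewrite (iter_mod T k1 z1 Hk1 Hz1p j) in Hbw1 |- *.
      rewrite Rabs_minus_sym. left. apply Hc1; [apply Nat.mod_upper_bound; lia|].
      rewrite Hsym. lra.
    - intros j Hj. specialize (Hbw2 j Hj). simpl in Hbw2.
      rewrite <- iter_add, Nat.add_comm in Hbw2.
      rewrite (iter_mod T k2 y Hk2 Hyp j) in Hbw2 |- *.
      rewrite Rabs_minus_sym. left. apply Hc2; [apply Nat.mod_upper_bound; lia|].
      rewrite Hsym. lra.
    - apply abs_le_iff in Hlam'. apply abs_le_iff. lra.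
    -
      assert (HPpos : 0 < INR p1 + INR p2) by lra.
      assert (T1 : 2 * B * (INR k1 + INR k2) / (INR p1 + INR p2) <= eta / 8).
      { apply (Rmult_le_reg_r (INR p1 + INR p2)); auto.
        unfold Rdiv. rewrite Rmult_assoc, Rinv_l, Rmult_1_r by lra. nra. }
      assert (T2 : 2 * B * e <= eta / 8).
      { apply Rle_trans with (2 * B * (eta / (16 * (B + 1)))). apply Rmult_le_compat_l; lra.
        apply (Rmult_le_reg_r (16 * (B + 1))); [lra|]. field_simplify; nra. }
      assert (T3 : 2 * B * d <= eta / 8).
      { apply Rle_trans with (2 * B * / (2 * INR M)). apply Rmult_le_compat_l; lra.
        apply (Rmult_le_reg_r (2 * INR M)); [lra|]. field_simplify; [|lra]. nra. }
      unfold eta0. lra. }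
  set (lamA := if Rle_dec lam (1/2) then lam else lam - d).
  assert (HA : Rabs (lamA - lam) <= d /\ 0 <= lamA <= 1 /\ Rabs (lamA + d - lam) <= d /\ 0 <= lamA + d <= 1).
  { unfold lamA; destruct (Rle_dec lam (1/2)); rewrite !abs_le_iff; lra. }
  destruct HA as [HA1 [HA2 [HA3 HA4]]].
  destruct (proj2 HK z1 y e lamA Hz1 Hy Hepos HA2) as [p1 [p2 [q1 [q2 [w Hw]]]]].
  destruct (Compare_dec.le_lt_dec M (p1 + p2)) as [HPM|HPM].
  { exact (Finish lamA HA1 p1 p2 q1 q2 w Hw HPM). }
  destruct (proj2 HK z1 y e (lamA + d) Hz1 Hy Hepos HA4) as [p1' [p2' [q1' [q2' [w' Hw']]]]].
  destruct (Compare_dec.le_lt_dec M (p1' + p2')) as [HPM'|HPM'].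
  { exact (Finish (lamA + d) HA3 p1' p2' q1' q2' w' Hw' HPM'). }
  exfalso.
  destruct Hw as [Hp1 [Hp2 [_ [_ [_ [_ [Hf _]]]]]]].
  destruct Hw' as [Hp1' [Hp2' [_ [_ [_ [_ [Hf' _]]]]]]].
  apply (spacing M p1 p2 p1' p2' lamA e d); auto; try lia; try lra; apply abs_le_iff; lra.
Qed.

End Two.


Lemma finite_choice (n : nat) (P : nat -> R -> Prop) :
  (forall i, (i < n)%nat -> exists v, P i v) -> exists c : nat -> R, forall i, (i < n)%nat -> P i (c i).
Proof.
  induction n; intros H.
  - exists (fun _ => 0). intros; lia.
  - destruct IHn as [c Hc]. { intros; apply H; lia. }
    destruct (H n (Nat.lt_succ_diag_r n)) as [v Hv].
    exists (fun i => if Nat.eq_dec i n then v else c i). intros i Hi.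
    destruct (Nat.eq_dec i n) as [->|]; auto. apply Hc; lia.
Qed.

Lemma sumR_nonneg_zero n g : (forall i, (i < n)%nat -> 0 <= g i) -> sumR n g = 0 ->
  forall i, (i < n)%nat -> g i = 0.
Proof.
  induction n; intros H Hs i Hi; [lia|]. simpl in Hs.
  assert (0 <= sumR n g) by (apply sumR_nonneg; intros; apply H; lia).
  assert (0 <= g n) by (apply H; lia).
  destruct (Nat.eq_dec i n) as [->|]; [lra|]. apply IHn; [intros; apply H; lia|lra|lia].
Qed.

Section Combo2.
Context {X : Type}.

Lemma combo_approx (rho : X -> X -> R) T K (Hmet : is_metric rho) (HK : linkable rho T K) :
  forall n lam (ms : nat -> (X -> Prop) -> R),
  (forall i, (i < n)%nat -> 0 <= lam i /\ Mco T K (ms i)) -> sumR n lam = 1 ->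
  forall fs, (forall f, In f fs -> bounded_continuous rho f) -> forall eta, 0 < eta ->
  exists w k, K w /\ minimal_period T w k /\ forall f, In f fs ->
    exists c : nat -> R, (forall i, (i < n)%nat -> integral_is (ms i) f (c i)) /\
      Rabs (avg T f w k - sumR n (fun i => lam i * c i)) < eta.
Proof.
  induction n; intros lam ms Hi Hs fs Hfs eta Heta.
  - simpl in Hs. lra.
  - destruct (proj2 (Hi n (Nat.lt_succ_diag_r n))) as [y [k2 [Ky [Hmy Hmsn]]]].
    assert (Hk2 : (0 < k2)%nat) by apply Hmy.
    simpl in Hs. set (s := sumR n lam) in Hs.
    assert (Hs0 : 0 <= s) by (apply sumR_nonneg; intros; apply Hi; lia).
    assert (Hln : 0 <= lam n) by (apply Hi; lia).
    assert (Hint : forall f, exists c : nat -> R, forall i, (i < n)%nat -> integral_is (ms i) f (c i)).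
    { intros f. apply (finite_choice n (fun i v => integral_is (ms i) f v)). intros i Hin.
      destruct (proj2 (Hi i ltac:(lia))) as [x [k [_ [Hm ->]]]].
      exists (avg T f x k). apply integral_orbit. apply Hm. }
    destruct (Req_dec s 0) as [Hz|Hnz].
    + exists y, k2. split; auto. split; auto. intros f Hf.
      destruct (Hint f) as [c Hc].
      exists (fun i => if Nat.eq_dec i n then avg T f y k2 else c i). split.
      * intros i Hin. destruct (Nat.eq_dec i n) as [->|]; [rewrite Hmsn; apply integral_orbit; auto|apply Hc; lia].
      * simpl. destruct (Nat.eq_dec n n) as [_|]; [|congruence].
        rewrite (sumR_ext n _ (fun _ => 0)).
        -- rewrite sumR_const. replace (lam n) with 1 by lra. rewrite Rabs_right; lra.
        -- intros i Hin. destruct (Nat.eq_dec i n); [lia|].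
           rewrite (sumR_nonneg_zero n lam) by (auto; intros; apply Hi; lia). ring.
    + assert (Hspos : 0 < s) by lra.
      destruct (IHn (fun i => lam i / s) ms) with (fs := fs) (eta := eta / 2) as [z1 [k1 [Kz1 [Hmz1 Hz1]]]]; auto.
      { intros i Hin. split; [unfold Rdiv; apply Rmult_le_pos; [apply Hi; lia| left; apply Rinv_0_lt_compat; lra]| apply Hi; lia]. }
      { unfold Rdiv. rewrite (sumR_ext n _ (fun i => / s * lam i)) by (intros; ring). rewrite sumR_scal.
        fold s. field. lra. }
      { lra. }
      destruct (two_point rho T K Hmet HK z1 k1 y k2 s Kz1 Hmz1 Ky Hmy ltac:(lra) fs Hfs (eta / 2) ltac:(lra))
        as [w [k [Kw [Hmw Hw]]]].
      exists w, k. split; auto. split; auto. intros f Hf.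
      destruct (Hz1 f Hf) as [c [Hc Hcb]].
      exists (fun i => if Nat.eq_dec i n then avg T f y k2 else c i). split.
      * intros i Hin. destruct (Nat.eq_dec i n) as [->|]; [rewrite Hmsn; apply integral_orbit; auto|apply Hc; lia].
      * simpl. destruct (Nat.eq_dec n n) as [_|]; [|congruence].
        rewrite (sumR_ext n _ (fun i => s * (lam i / s * c i))).
        2: { intros i Hin. destruct (Nat.eq_dec i n); [lia|]. field. lra. }
        rewrite sumR_scal.
        specialize (Hw f Hf).
        replace (lam n) with (1 - s) by lra.
        set (A := sumR n (fun i => lam i / s * c i)) in *.
        replace (avg T f w k - (s * A + (1 - s) * avg T f y k2)) with
          ((avg T f w k - (s * avg T f z1 k1 + (1 - s) * avg T f y k2)) + s * (avg T f z1 k1 - A)) by ring.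
        eapply Rle_lt_trans; [apply Rabs_triang|]. rewrite Rabs_mult, (Rabs_right s) by lra.
        assert (s * Rabs (avg T f z1 k1 - A) <= 1 * (eta / 2)).
        { apply Rmult_le_compat; try lra; apply Rabs_pos. }
        lra.
Qed.

End Combo2.


Theorem theorem5p13 (X : Type) (rho : X -> X -> R) (T : X -> X) (K : X -> Prop)
  (HX : dynamical_system rho T) (HK : linkable rho T K) :
  forall mu : (X -> Prop) -> R,
    weak_closure rho (Mco T K) mu <->
    weak_closure rho (convex_hull (Mco T K)) mu.
Proof.
  intros mu. destruct HX as [Hmet _]. split.
  - intros [Hp Hw]. split; auto. intros fs eps Hfs Heps.
    destruct (Hw fs eps Hfs Heps) as [nu [Hnu Hf]]. exists nu. split; auto.
    exists 1%nat, (fun _ => 1), (fun _ => nu). split; [intros; split; auto; lra|].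
    split; [simpl; lra|]. intros A; simpl; ring.
  - intros [Hp Hw]. split; auto. intros fs eps Hfs Heps.
    destruct (Hw fs (eps / 2) Hfs ltac:(lra)) as [nu [[n [lam [ms [Hi [Hs Hnu]]]]] Hf]].
    rewrite Forall_forall in Hfs, Hf.
    destruct (combo_approx rho T K Hmet HK n lam ms Hi Hs fs Hfs (eps / 2) ltac:(lra))
      as [w [k [Kw [Hmw Hc]]]].
    exists (orbit_measure T w k). split; [exists w, k; auto|].
    apply Forall_forall. intros f Hin.
    destruct (Hf f Hin) as [a [b [Ha [Hb Hab]]]].
    destruct (Hc f Hin) as [c [Hci Hcb]].
    destruct (proj1 (Hfs f Hin)) as [B HB].
    assert (Hb' : integral_is nu f (sumR n (fun i => lam i * c i))).
    { apply (integral_combo nu n lam ms f c Hnu); auto. intros; apply Hi; auto. }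
    pose proof (integral_unique nu f B b _ HB Hb Hb') as Heq.
    exists a, (avg T f w k). split; auto. split; [apply integral_orbit; apply Hmw|].
    rewrite Heq in Hab.
    replace (a - avg T f w k) with ((a - sumR n (fun i => lam i * c i)) - (avg T f w k - sumR n (fun i => lam i * c i))) by ring.
    eapply Rle_lt_trans; [apply Rabs_triang|]. rewrite Rabs_Ropp. lra.
Qed.
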